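(* Let $X$ be an admissible complete CAT(1) space, $f\colon X\to(-\infty,\infty]$ a proper lower semicontinuous convex function, and $R_f$ the resolvent of $f$. Then $\mathrm{Argmin}_X f$ is nonempty if and only if there exists $x\in X$ such that $\{R_f^nx\}$ is spherically bounded and $\sup_n d(R_f^nx,R_f^{n-1}x)<\pi/2$. In this case, $\{R_f^nx\}$ is $\Delta$-convergent to an element of $\mathrm{Argmin}_X f$ for each $x\in X$.
   Context: A CAT(1) space is a $\pi$-geodesic metric space in which every geodesic triangle of perimeter $<2\pi$ satisfies the CAT(1) comparison inequality relative to comparison triangles in $\mathbb S^2$; it is admissible if $d(v,v')<\pi/2$ for all $v,v'$ (hence uniquely geodesic). $f$ is proper if it takes a real value somewhere, convex if $f(\alpha x\oplus(1-\alpha)y)\le\alpha f(x)+(1-\alpha)f(y)$ for $x,y\in X$, $\alpha\in(0,1)$, where $\alpha x\oplus(1-\alpha)y$ is the point on the geodesic from $x$ to $y$ at distance $(1-\alpha)d(x,y)$ from $x$. The resolvent is $R_fx=\mathrm{Argmin}_{y\in X}\{f(y)+\tan d(y,x)\sin d(y,x)\}$, which is a well-defined single point for each $x$ (known fact). A sequence is spherically bounded if $\inf_{y}\limsup_n d(x_n,y)<\pi/2$. $\{x_n\}$ is $\Delta$-convergent to $p$ if for every subsequence $\{x_{n_i}\}$, $p$ is the unique minimizer of $z\mapsto\limsup_i d(x_{n_i},z)$. *)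

(* Defs.v *)
From Stdlib Require Import Reals Lra.
Open Scope R_scope.

Inductive ER := Fin (r : R) | PInf.

Definition Er_le (a b : ER) : Prop :=
  match a, b with
  | _, PInf => True
  | PInf, Fin _ => False
  | Fin x, Fin y => x <= y
  end.

Definition Er_lt (a b : ER) : Prop :=
  match a, b with
  | Fin x, PInf => True
  | PInf, _ => False
  | Fin x, Fin y => x < y
  end.

Definition Er_addr (a : ER) (r : R) : ER :=
  match a with Fin x => Fin (x + r) | PInf => PInf end.

Section Metric.
Context {X : Type} (d : X -> X -> R).

Definition is_metric : Prop :=
  (forall x y, 0 <= d x y) /\ (forall x y, d x y = 0 <-> x = y) /\
  (forall x y, d x y = d y x) /\ (forall x y z, d x z <= d x y + d y z).

Definition complete : Prop :=
  forall u : nat -> X,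
    (forall eps, eps > 0 -> exists N, forall m n, (N <= m)%nat -> (N <= n)%nat ->
        d (u m) (u n) < eps) ->
    exists l, forall eps, eps > 0 -> exists N, forall n, (N <= n)%nat -> d (u n) l < eps.

Definition geodesic (x y : X) (c : R -> X) : Prop :=
  c 0 = x /\ c (d x y) = y /\
  forall s t, 0 <= s <= d x y -> 0 <= t <= d x y -> d (c s) (c t) = Rabs (s - t).

Definition pi_geodesic : Prop :=
  forall x y, d x y < PI -> exists c, geodesic x y c.

Definition V3 := (R * R * R)%type.
Definition dot (u v : V3) : R :=
  let '(a1, a2, a3) := u in let '(b1, b2, b3) := v in a1*b1 + a2*b2 + a3*b3.
Definition on_S2 (u : V3) : Prop := dot u u = 1.
Definition dS2 (u v : V3) : R := acos (dot u v).
Definition lin2 (a : R) (u : V3) (b : R) (v : V3) : V3 :=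
  let '(a1, a2, a3) := u in let '(b1, b2, b3) := v in
  (a*a1 + b*b1, a*a2 + b*b2, a*a3 + b*b3).
(* point at distance t from u on the minimal arc from u to v, where l = dS2 u v *)
Definition sph_pt (u v : V3) (l t : R) : V3 :=
  if Req_EM_T (sin l) 0 then u else lin2 (sin (l - t) / sin l) u (sin t / sin l) v.

Definition side_pt (a b : X) (c : R -> X) (ab bb : V3) (p : X) (pb : V3) : Prop :=
  exists t, 0 <= t <= d a b /\ p = c t /\ pb = sph_pt ab bb (d a b) t.

Definition CAT1_ineq : Prop :=
  forall (x y z : X) (cxy cyz czx : R -> X),
    geodesic x y cxy -> geodesic y z cyz -> geodesic z x czx ->
    d x y + d y z + d z x < 2 * PI ->
    forall xb yb zb : V3, on_S2 xb -> on_S2 yb -> on_S2 zb ->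
      dS2 xb yb = d x y -> dS2 yb zb = d y z -> dS2 zb xb = d z x ->
      let tri p pb :=
        side_pt x y cxy xb yb p pb \/ side_pt y z cyz yb zb p pb \/
        side_pt z x czx zb xb p pb in
      forall p pb q qb, tri p pb -> tri q qb -> d p q <= dS2 pb qb.

Definition CAT1_space : Prop := is_metric /\ pi_geodesic /\ CAT1_ineq.

Definition admissible : Prop := forall v v', d v v' < PI / 2.

Definition proper (f : X -> ER) : Prop := exists x r, f x = Fin r.

Definition lsc (f : X -> ER) : Prop :=
  forall x r, Er_lt (Fin r) (f x) ->
    exists delta, delta > 0 /\ forall y, d x y < delta -> Er_lt (Fin r) (f y).

(* alpha x (+) (1-alpha) y = c ((1-alpha) d(x,y)) for a geodesic c from x to y *)
Definition convex (f : X -> ER) : Prop :=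
  forall x y a c, 0 < a < 1 -> geodesic x y c ->
    match f x, f y with
    | Fin u, Fin v => Er_le (f (c ((1 - a) * d x y))) (Fin (a * u + (1 - a) * v))
    | _, _ => True
    end.

Definition is_argmin (f : X -> ER) (p : X) : Prop := forall y, Er_le (f p) (f y).

Definition is_resolvent (f : X -> ER) (Rf : X -> X) : Prop :=
  forall x, is_argmin (fun y => Er_addr (f y) (tan (d y x) * sin (d y x))) (Rf x).

Definition is_limsup (u : nat -> R) (L : R) : Prop :=
  (forall eps, eps > 0 -> exists N, forall n, (N <= n)%nat -> u n <= L + eps) /\
  (forall eps N, eps > 0 -> exists n, (N <= n)%nat /\ L - eps <= u n).

(* limsup_n u n < c  (limsup possibly +oo) *)
Definition limsup_lt (u : nat -> R) (c : R) : Prop :=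
  exists c' N, c' < c /\ forall n, (N <= n)%nat -> u n <= c'.

(* inf_y limsup_n d(x_n, y) < pi/2 *)
Definition spherically_bounded (x : nat -> X) : Prop :=
  exists y, limsup_lt (fun n => d (x n) y) (PI / 2).

Definition sup_lt (u : nat -> R) (c : R) : Prop :=
  exists c', c' < c /\ forall n, u n <= c'.

Definition Delta_conv (x : nat -> X) (p : X) : Prop :=
  forall phi : nat -> nat, (forall i, (phi i < phi (S i))%nat) ->
    exists Lp, is_limsup (fun i => d (x (phi i)) p) Lp /\
      forall z Lz, z <> p -> is_limsup (fun i => d (x (phi i)) z) Lz -> Lp < Lz.

End Metric.

Definition iter {X : Type} (n : nat) (g : X -> X) (x : X) : X := Nat.iter n g x.

(* Main.v *)
From Pilot Require Import Defs.
From Stdlib Require Import Reals Lra Lia Psatz Classical ClassicalEpsilon.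
From Coquelicot Require Import Coquelicot.
Import Pilot.Defs.
Open Scope R_scope.

Definition SH {X : Type} (d : X -> X -> R) : Prop :=
  is_metric d /\ pi_geodesic d /\ CAT1_ineq d /\ admissible d.

Lemma PI2_lt_PI : PI / 2 < PI.
Proof. pose proof PI_RGT_0; lra. Qed.

Lemma cos_le_dec a b : 0 <= a -> a <= b -> b <= PI -> cos b <= cos a.
Proof.
  intros Ha Hab Hb. destruct (Req_dec a b) as [->|Hne]; [lra|].
  left. apply cos_decreasing_1; lra.
Qed.

Lemma cos_le_inv a b : 0 <= a <= PI -> 0 <= b <= PI -> cos a <= cos b -> b <= a.
Proof.
  intros Ha Hb H. destruct (Rle_lt_dec b a) as [h|h]; auto.
  exfalso. pose proof (cos_decreasing_1 a b ltac:(lra) ltac:(lra) ltac:(lra) ltac:(lra) h). lra.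
Qed.

Lemma cos_lt_inv a b : 0 <= a <= PI -> 0 <= b <= PI -> cos a < cos b -> b < a.
Proof. intros; apply cos_decreasing_0; lra. Qed.

Lemma cos_lip a b : Rabs (cos a - cos b) <= Rabs (a - b).
Proof.
  destruct (MVT_abs cos (fun x => - sin x) b a) as [c [Hc _]].
  { intros; apply derivable_pt_lim_cos. }
  rewrite Hc. rewrite Rabs_Ropp. pose proof (SIN_bound c).
  assert (Rabs (sin c) <= 1) by (apply Rabs_le; lra).
  pose proof (Rabs_pos (a - b)). nra.
Qed.

Lemma cos_lip1 a b : cos a <= cos b + Rabs (a - b).
Proof. pose proof (cos_lip a b). pose proof (Rle_abs (cos a - cos b)). lra. Qed.


Lemma d_nn {X} (d : X -> X -> R) (H : SH d) x y : 0 <= d x y.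
Proof. destruct H as [[h _] _]; auto. Qed.
Lemma d_sym {X} (d : X -> X -> R) (H : SH d) x y : d x y = d y x.
Proof. destruct H as [[_ [_ [h _]]] _]; auto. Qed.
Lemma d_tri {X} (d : X -> X -> R) (H : SH d) x y z : d x z <= d x y + d y z.
Proof. destruct H as [[_ [_ [_ h]]] _]; auto. Qed.
Lemma d_eq0 {X} (d : X -> X -> R) (H : SH d) x y : d x y = 0 -> x = y.
Proof. destruct H as [[_ [h _]] _]; apply h. Qed.
Lemma d_refl {X} (d : X -> X -> R) (H : SH d) x : d x x = 0.
Proof. destruct H as [[_ [h _]] _]; apply h; auto. Qed.
Lemma d_lt {X} (d : X -> X -> R) (H : SH d) x y : d x y < PI / 2.
Proof. destruct H as [_ [_ [_ h]]]; auto. Qed.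
Lemma d_geo {X} (d : X -> X -> R) (H : SH d) x y : exists c, geodesic d x y c.
Proof. pose proof (d_lt d H x y). pose proof PI_RGT_0. destruct H as [_ [h _]]. apply h. lra. Qed.

Lemma cos_d_pos {X} (d : X -> X -> R) (H : SH d) x y : 0 < cos (d x y).
Proof. pose proof (d_lt d H x y); pose proof (d_nn d H x y); apply cos_gt_0; pose proof PI_RGT_0; lra. Qed.
Lemma cos_d_le1 {X} (d : X -> X -> R) (H : SH d) x y : cos (d x y) <= 1.
Proof. apply COS_bound. Qed.

Lemma sph_pt_0 u v l : sph_pt u v l 0 = u.
Proof.
  unfold sph_pt. destruct (Req_EM_T (sin l) 0); auto.
  destruct u as [[u1 u2] u3]; destruct v as [[v1 v2] v3]. unfold lin2.
  rewrite Rminus_0_r, sin_0. unfold Rdiv. rewrite Rinv_r by auto.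
  f_equal; [f_equal|]; ring.
Qed.

Lemma CS3 (p z : V3) : (dot p z)^2 <= dot p p * dot z z.
Proof.
  destruct p as [[a1 a2] a3]; destruct z as [[b1 b2] b3]; simpl.
  assert (E : (a1*b1+a2*b2+a3*b3)^2 + ((a1*b2-a2*b1)^2 + (a1*b3-a3*b1)^2 + (a2*b3-a3*b2)^2)
     = (a1*a1+a2*a2+a3*a3)*(b1*b1+b2*b2+b3*b3)) by ring.
  assert (0 <= (a1*b2-a2*b1)^2 + (a1*b3-a3*b1)^2 + (a2*b3-a3*b2)^2).
  { pose proof (pow2_ge_0 (a1*b2-a2*b1)); pose proof (pow2_ge_0 (a1*b3-a3*b1));
    pose proof (pow2_ge_0 (a2*b3-a3*b2)); lra. }
  lra.
Qed.

Lemma CI {X} (d : X -> X -> R) (H : SH d) x y z c t :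
  geodesic d x y c -> 0 < d x y -> 0 <= t <= d x y ->
  cos (d x z) * sin (d x y - t) + cos (d y z) * sin t <= cos (d (c t) z) * sin (d x y).
Proof.
  intros Hc Hl Ht.
  pose proof PI_RGT_0 as Hpi.
  destruct (d_geo d H y z) as [cyz Hyz]. destruct (d_geo d H z x) as [czx Hzx].
  set (l := d x y) in *. set (a := d y z). set (b := d z x).
  assert (Hl2 : l < PI / 2) by apply (d_lt d H).
  assert (Ha2 : a < PI / 2) by apply (d_lt d H).
  assert (Hb2 : b < PI / 2) by apply (d_lt d H).
  assert (Ha0 : 0 <= a) by apply (d_nn d H).
  assert (Hb0 : 0 <= b) by apply (d_nn d H).
  assert (sl : 0 < sin l) by (apply sin_gt_0; lra).
  assert (sb : 0 <= sin b) by (apply sin_ge_0; lra).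
  assert (ca : 0 < cos a) by (apply cos_gt_0; lra).
  assert (cb : 0 < cos b) by (apply cos_gt_0; lra).
  assert (S1 : d y x = l) by (unfold l; apply (d_sym d H)).
  assert (S2 : d x z = b) by (unfold b; apply (d_sym d H)).
  assert (S3 : d z y = a) by (unfold a; apply (d_sym d H)).
  pose proof (d_tri d H y x z). pose proof (d_tri d H x z y). pose proof (d_tri d H z y x).
  assert (T1 : a <= l + b) by (unfold a, l, b in *; lra).
  assert (T2 : l <= a + b) by (unfold a, l, b in *; lra).
  assert (T3 : b <= l + a) by (unfold a, l, b in *; lra).
  assert (C1 : cos (l + b) <= cos a) by (apply cos_le_dec; lra).
  assert (C2 : cos a <= cos (l - b)).
  { destruct (Rle_lt_dec b l).
    - apply cos_le_dec; lra.
    - replace (l - b) with (- (b - l)) by ring. rewrite cos_neg. apply cos_le_dec; lra. }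
  rewrite cos_plus in C1. rewrite cos_minus in C2.
  set (u := (cos a - cos l * cos b) / sin l).
  assert (Hu : u * sin l = cos a - cos l * cos b) by (unfold u; field; lra).
  assert (Hw : 0 <= 1 - cos b ^ 2 - u ^ 2).
  { assert (E : sin b ^2 + cos b^2 = 1) by (rewrite <- (sin2_cos2 b); unfold Rsqr; ring).
    assert (E2 : (u * sin l)^2 <= (sin l * sin b)^2).
    { rewrite Hu. assert (0 <= sin l * sin b) by nra.
      assert (0 <= sin l * sin b - (cos a - cos l * cos b)) by lra.
      assert (0 <= sin l * sin b + (cos a - cos l * cos b)) by lra. nra. }
    assert (u^2 <= sin b ^2).
    { destruct (Rle_lt_dec (u^2) (sin b^2)) as [h|h]; auto. exfalso.
      assert (0 < sin l ^2) by nra.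
      assert (sin b^2 * sin l^2 < u^2 * sin l^2) by (apply Rmult_lt_compat_r; auto).
      assert (E3 : (u * sin l)^2 = u^2 * sin l^2) by ring.
      assert (E4 : (sin l * sin b)^2 = sin b^2 * sin l^2) by ring. lra. }
    lra. }
  set (w := sqrt (1 - cos b ^ 2 - u ^ 2)).
  assert (Hww : w * w = 1 - cos b ^ 2 - u ^ 2) by (apply sqrt_sqrt; auto).
  set (xb := (1, 0, 0) : V3). set (yb := (cos l, sin l, 0) : V3).
  set (zb := (cos b, u, w) : V3).
  assert (on1 : on_S2 xb) by (unfold on_S2, xb; simpl; ring).
  assert (on2 : on_S2 yb) by (unfold on_S2, yb; simpl; pose proof (sin2_cos2 l); unfold Rsqr in *; lra).
  assert (on3 : on_S2 zb) by (unfold on_S2, zb; simpl; nra).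
  assert (e1 : dS2 xb yb = d x y).
  { unfold dS2, xb, yb; simpl. replace (1 * cos l + 0 * sin l + 0 * 0) with (cos l) by ring.
    fold l; apply acos_cos; lra. }
  assert (e2 : dS2 yb zb = d y z).
  { unfold dS2, yb, zb; simpl. replace (cos l * cos b + sin l * u + 0 * w) with (cos a) by lra.
    fold a; apply acos_cos; lra. }
  assert (e3 : dS2 zb xb = d z x).
  { unfold dS2, zb, xb; simpl. replace (cos b * 1 + u * 0 + w * 0) with (cos b) by ring.
    fold b; apply acos_cos; lra. }
  assert (Hper : d x y + d y z + d z x < 2 * PI) by (fold l a b; lra).
  destruct H as [Hm [Hg [Hcat Had]]].
  pose proof (Hcat x y z c cyz czx Hc Hyz Hzx Hper xb yb zb on1 on2 on3 e1 e2 e3) as K.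
  cbv zeta in K.
  specialize (K (c t) (sph_pt xb yb l t) z zb).
  assert (K' : d (c t) z <= dS2 (sph_pt xb yb l t) zb).
  { apply K.
    - left. exists t. split; [exact Ht|]. split; reflexivity.
    - right; right. exists 0. split; [fold b; lra|]. split.
      + destruct Hzx as [h _]; symmetry; exact h.
      + symmetry; apply sph_pt_0. }
  clear K.
  set (v := (sin (l - t) * cos b + sin t * cos a) / sin l).
  assert (Hpb : sph_pt xb yb l t = lin2 (sin (l - t) / sin l) xb (sin t / sin l) yb).
  { unfold sph_pt. destruct (Req_EM_T (sin l) 0); [lra|reflexivity]. }
  assert (Hdot : dot (sph_pt xb yb l t) zb = v).
  { rewrite Hpb. unfold xb, yb, zb, lin2, dot.
    set (al := sin (l - t) / sin l). set (be := sin t / sin l).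
    transitivity (al * cos b + be * (cos l * cos b + sin l * u)); [ring|].
    replace (cos l * cos b + sin l * u) with (cos a) by lra.
    unfold al, be, v. field. lra. }
  assert (Hpp : dot (sph_pt xb yb l t) (sph_pt xb yb l t) = 1).
  { rewrite Hpb. unfold xb, yb, lin2, dot.
    apply (Rmult_eq_reg_r (sin l ^ 2)); [|nra].
    field_simplify; [|lra].
    rewrite sin_minus. pose proof (sin2_cos2 l). pose proof (sin2_cos2 t). unfold Rsqr in *.
    nra. }
  pose proof (CS3 (sph_pt xb yb l t) zb) as Hcs. rewrite Hdot, Hpp in Hcs.
  unfold on_S2 in on3. rewrite on3 in Hcs.
  assert (Hv : -1 <= v <= 1) by nra.
  unfold dS2 in K'. rewrite Hdot in K'.
  assert (Hcv : v <= cos (d (c t) z)).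
  { rewrite <- (cos_acos v Hv) at 1. apply cos_le_dec; auto.
    - destruct Hm as [hn _]; apply hn.
    - apply acos_bound. }
  unfold v in Hcv. fold b. replace (d x z) with b by (unfold b; destruct Hm as [_ [_ [hs _]]]; apply hs).
  apply (Rmult_le_compat_r (sin l)) in Hcv; [|lra].
  unfold Rdiv in Hcv. rewrite Rmult_assoc, Rinv_l in Hcv by lra. lra.
Qed.

Lemma MID {X} (d : X -> X -> R) (H : SH d) x y z c :
  geodesic d x y c -> 0 < d x y ->
  cos (d x z) + cos (d y z) <= 2 * cos (d (c (d x y / 2)) z) * cos (d x y / 2).
Proof.
  intros Hc Hl. pose proof (d_lt d H x y).
  pose proof (CI d H x y z c (d x y / 2) Hc Hl ltac:(lra)) as K.
  replace (d x y - d x y / 2) with (d x y / 2) in K by field.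
  assert (E : sin (d x y) = 2 * sin (d x y / 2) * cos (d x y / 2))
    by (rewrite <- sin_2a; f_equal; field).
  rewrite E in K.
  assert (0 < sin (d x y / 2)) by (apply sin_gt_0; pose proof PI_RGT_0; lra).
  nra.
Qed.

Lemma MidKey {X} (d : X -> X -> R) (H : SH d) w z c s r e :
  geodesic d w z c -> 0 < d w z -> 0 <= r -> 0 <= e -> r + e <= PI ->
  d s w <= r + e -> d s z <= r + e -> r - e <= d s (c (d w z / 2)) ->
  cos r * (1 - cos (d w z / 2)) <= 2 * e.
Proof.
  intros Hc Hd Hr He Hre H1 H2 H3.
  pose proof (MID d H w z s c Hc Hd) as M.
  rewrite (d_sym d H w s), (d_sym d H z s), (d_sym d H (c _) s) in M.
  pose proof PI_RGT_0. pose proof (d_lt d H w z).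
  assert (A1 : cos (r + e) <= cos (d s w)) by (apply cos_le_dec; auto; apply (d_nn d H)).
  assert (A2 : cos (r + e) <= cos (d s z)) by (apply cos_le_dec; auto; apply (d_nn d H)).
  assert (A3 : cos r <= cos (r + e) + e).
  { pose proof (cos_lip1 r (r + e)). replace (r - (r + e)) with (- e) in H5 by ring.
    rewrite Rabs_Ropp, Rabs_pos_eq in H5; lra. }
  assert (A4 : cos (d s (c (d w z / 2))) <= cos r + e).
  { pose proof (d_lt d H s (c (d w z / 2))).
    assert (cos (d s (c (d w z / 2))) <= cos (Rmax 0 (r - e))).
    { apply cos_le_dec; [apply Rmax_l| apply Rmax_lub; auto; apply (d_nn d H)| lra]. }
    pose proof (cos_lip1 (Rmax 0 (r - e)) r).
    assert (Rabs (Rmax 0 (r - e) - r) <= e).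
    { apply Rabs_le. unfold Rmax; destruct (Rle_dec 0 (r - e)); lra. }
    lra. }
  assert (0 <= cos (d w z / 2)) by (apply cos_ge_0; lra).
  assert (cos (d w z / 2) <= 1) by apply COS_bound.
  nra.
Qed.

Lemma deriv_bound (F : R -> R) D A l :
  derivable_pt_lim F 0 D -> 0 < l -> (forall t, 0 < t < l -> A * t <= F t - F 0) -> A <= D.
Proof.
  intros HD Hl Hb. destruct (Rle_lt_dec A D) as [h|h]; auto. exfalso.
  destruct (HD (A - D) ltac:(lra)) as [del Hdel].
  set (t := Rmin (del / 2) (l / 2)).
  assert (Ht0 : 0 < t) by (unfold t; apply Rmin_glb_lt; pose proof (cond_pos del); lra).
  assert (Ht1 : t < l) by (unfold t; pose proof (Rmin_r (del/2) (l/2)); lra).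
  assert (Ht2 : t < del) by (unfold t; pose proof (Rmin_l (del/2) (l/2)); pose proof (cond_pos del); lra).
  specialize (Hdel t ltac:(lra) ltac:(rewrite Rabs_pos_eq; lra)).
  rewrite Rplus_0_l in Hdel. specialize (Hb t ltac:(lra)).
  apply Rabs_lt_between in Hdel.
  assert (A <= (F t - F 0) / t).
  { apply (Rmult_le_reg_r t); auto. unfold Rdiv. rewrite Rmult_assoc, Rinv_l by lra. lra. }
  lra.
Qed.

Lemma tansin s : 0 < cos s -> tan s * sin s = / cos s - cos s.
Proof.
  intros h. unfold tan. pose proof (sin2_cos2 s). unfold Rsqr in *.
  replace (sin s / cos s * sin s) with ((sin s * sin s) / cos s) by (field; lra).
  replace (sin s * sin s) with (1 - cos s * cos s) by lra. field. lra.
Qed.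

Lemma RI {X} (d : X -> X -> R) f Rf (H : SH d) (Hconv : convex d f) (Hres : is_resolvent d f Rf)
  x y fu fy :
  f (Rf x) = Fin fu -> f y = Fin fy -> 0 < d (Rf x) y ->
  (fu - fy) / d (Rf x) y <=
  (1 + / (cos (d (Rf x) x))^2) * (cos (d (Rf x) x) * cos (d (Rf x) y) - cos (d y x)) / sin (d (Rf x) y).
Proof.
  intros Hfu Hfy Hl.
  set (u := Rf x) in *. set (l := d u y) in *.
  set (C := cos (d u x)). set (E := cos (d y x)).
  destruct (d_geo d H u y) as [c Hc].
  pose proof PI_RGT_0.
  assert (Hl2 : l < PI / 2) by apply (d_lt d H).
  assert (sl : 0 < sin l) by (apply sin_gt_0; lra).
  assert (HC : 0 < C) by apply (cos_d_pos d H).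
  assert (HE : 0 < E) by apply (cos_d_pos d H).
  set (k := fun t => (C * sin (l - t) + E * sin t) / sin l).
  set (F := fun t => / k t - k t).
  assert (Step1 : forall t, 0 < t < l -> (fu - fy) / l * t <= F t - F 0).
  { intros t Ht.
    pose proof (Hconv u y (1 - t / l) c) as Hcv.
    assert (Ha : 0 < 1 - t / l < 1).
    { split; [|assert (0 < t / l) by (apply Rdiv_lt_0_compat; lra); lra].
      assert (t / l < 1) by (apply (Rmult_lt_reg_r l); [lra|]; unfold Rdiv; rewrite Rmult_assoc, Rinv_l by lra; lra). lra. }
    specialize (Hcv Ha Hc). rewrite Hfu, Hfy in Hcv. fold l in Hcv.
    replace ((1 - (1 - t / l)) * l) with t in Hcv by (field; lra).
    destruct (f (c t)) as [fw|] eqn:Efw; [|simpl in Hcv; contradiction].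
    simpl in Hcv.
    pose proof (Hres x (c t)) as Hr. cbv beta in Hr. fold u in Hr. rewrite Hfu, Efw in Hr. simpl in Hr.
    rewrite (tansin _ HC), (tansin _ (cos_d_pos d H _ _)) in Hr. fold C in Hr.
    pose proof (CI d H u y x c t Hc Hl ltac:(fold l; lra)) as Hci. fold l C E in Hci.
    assert (sinpos : 0 < sin t) by (apply sin_gt_0; lra).
    assert (sinpos2 : 0 <= sin (l - t)) by (apply sin_ge_0; lra).
    assert (Hk : 0 < k t) by (unfold k; apply Rdiv_lt_0_compat; nra).
    assert (Hk2 : k t <= cos (d (c t) x)).
    { unfold k. apply (Rmult_le_reg_r (sin l)); auto. unfold Rdiv.
      rewrite Rmult_assoc, Rinv_l by lra. lra. }
    assert (Hh : / cos (d (c t) x) - cos (d (c t) x) <= / k t - k t).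
    { assert (/ cos (d (c t) x) <= / k t) by (apply Rinv_le_contravar; auto). lra. }
    assert (Hk0 : k 0 = C) by (unfold k; rewrite Rminus_0_r, sin_0; field; lra).
    unfold F. rewrite Hk0.
    replace ((fu - fy) / l * t) with (t / l * fu - t / l * fy) by (field; lra).
    lra. }
  assert (Step2 : is_derive F 0 ((- / C ^ 2 - 1) * ((- C * cos l + E) / sin l))).
  { unfold F, k. auto_derive.
    - replace (l + - 0) with l by ring. rewrite sin_0.
      replace ((C * sin l + E * 0) * / sin l) with C by (field; lra). lra.
    - replace (l + - 0) with l by ring. rewrite sin_0, cos_0.
      replace ((C * sin l + E * 0) * / sin l) with C by (field; lra).
      field. split; lra. }
  apply is_derive_Reals in Step2.
  pose proof (deriv_bound F _ _ l Step2 Hl Step1).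
  unfold C, E in *. fold u l. replace (d y x) with (d y x) by reflexivity.
  apply (Rle_trans _ _ _ H1). right. field. split; [lra|]. pose proof (cos_d_pos d H u x); lra.
Qed.

Lemma Rf_fin {X} (d : X -> X -> R) f Rf (Hp : proper f) (Hres : is_resolvent d f Rf) x :
  exists fu, f (Rf x) = Fin fu.
Proof.
  destruct Hp as [x0 [r Hr]]. pose proof (Hres x x0) as K. cbv beta in K. rewrite Hr in K.
  destruct (f (Rf x)) as [fu|]; [eauto|simpl in K; contradiction].
Qed.

Lemma PAIR {X} (d : X -> X -> R) f Rf (H : SH d) (Hp : proper f) (Hconv : convex d f)
  (Hres : is_resolvent d f Rf) x y :
  (1 + / (cos (d (Rf x) x))^2) * (cos (d (Rf y) x) - cos (d (Rf x) x) * cos (d (Rf x) (Rf y)))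
  <= (1 + / (cos (d (Rf y) y))^2) * (cos (d (Rf y) y) * cos (d (Rf x) (Rf y)) - cos (d (Rf x) y)).
Proof.
  destruct (Rf_fin d f Rf Hp Hres x) as [fu Hu].
  destruct (Rf_fin d f Rf Hp Hres y) as [fv Hv].
  pose proof (d_nn d H (Rf x) (Rf y)) as Hn.
  destruct (Req_dec (d (Rf x) (Rf y)) 0) as [h0|h0].
  - pose proof (d_eq0 d H _ _ h0) as E. rewrite h0, cos_0, E. right. ring.
  - assert (Hl : 0 < d (Rf x) (Rf y)) by lra.
    pose proof (RI d f Rf H Hconv Hres x (Rf y) fu fv Hu Hv Hl) as R1.
    assert (Hl' : 0 < d (Rf y) (Rf x)) by (rewrite (d_sym d H); lra).
    pose proof (RI d f Rf H Hconv Hres y (Rf x) fv fu Hv Hu Hl') as R2.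
    rewrite (d_sym d H (Rf y) (Rf x)) in R2.
    assert (sl : 0 < sin (d (Rf x) (Rf y))) by (apply sin_gt_0; pose proof (d_lt d H (Rf x) (Rf y)); pose proof PI_RGT_0; lra).
    revert R1 R2 sl Hl. generalize (d (Rf x) (Rf y)). intros l R1 R2 sl Hl.
    set (P := (1 + / cos (d (Rf x) x) ^ 2) * (cos (d (Rf x) x) * cos l - cos (d (Rf y) x))) in *.
    set (Q := (1 + / cos (d (Rf y) y) ^ 2) * (cos (d (Rf y) y) * cos l - cos (d (Rf x) y))) in *.
    assert (E1 : (fu - fv) / l + (fv - fu) / l = 0) by (field; lra).
    assert (HH : 0 <= P / sin l + Q / sin l) by lra.
    assert (HPQ : 0 <= P + Q).
    { replace (P / sin l + Q / sin l) with ((P + Q) / sin l) in HH by (field; lra).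
      destruct (Rle_lt_dec 0 (P + Q)) as [h|h]; auto.
      assert ((P + Q) / sin l < 0) by (apply Rdiv_neg_pos; auto). lra. }
    assert (EP : (1 + / cos (d (Rf x) x) ^ 2) * (cos (d (Rf y) x) - cos (d (Rf x) x) * cos l) = - P)
      by (unfold P; ring).
    rewrite EP. lra.
Qed.

Lemma FixArg {X} (d : X -> X -> R) f Rf (H : SH d) (Hp : proper f) (Hconv : convex d f)
  (Hres : is_resolvent d f Rf) z : Rf z = z -> is_argmin f z.
Proof.
  intros Hz y. destruct (Rf_fin d f Rf Hp Hres z) as [fz Hfz]. rewrite Hz in Hfz.
  rewrite Hfz. destruct (f y) as [fy|] eqn:Efy; [|exact I]. simpl.
  destruct (Req_dec (d z y) 0) as [h0|h0].
  - apply (d_eq0 d H) in h0. subst y. rewrite Hfz in Efy. injection Efy; lra.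
  - assert (Hl : 0 < d (Rf z) y) by (rewrite Hz; pose proof (d_nn d H z y); lra).
    rewrite <- Hz in Hfz.
    pose proof (RI d f Rf H Hconv Hres z y fz fy Hfz Efy Hl) as K.
    rewrite Hz, (d_refl d H), cos_0, (d_sym d H y z) in K.
    replace ((1 + / 1 ^ 2) * (1 * cos (d z y) - cos (d z y)) / sin (d z y)) with 0 in K
      by (unfold Rdiv; ring).
    assert (0 < d z y) by (rewrite <- Hz; exact Hl).
    destruct (Rle_lt_dec fz fy) as [h|h]; auto.
    assert (0 < (fz - fy) / d z y) by (apply Rdiv_lt_0_compat; lra). lra.
Qed.

Lemma argmin_fin {X} (f : X -> ER) (Hp : proper f) p : is_argmin f p -> exists fp, f p = Fin fp.
Proof.
  intros Hm. destruct Hp as [x0 [r Hr]]. pose proof (Hm x0) as K. rewrite Hr in K.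
  destruct (f p) as [fp|]; [eauto|simpl in K; contradiction].
Qed.

Lemma ArgFix {X} (d : X -> X -> R) f Rf (H : SH d) (Hp : proper f)
  (Hres : is_resolvent d f Rf) p : is_argmin f p -> Rf p = p.
Proof.
  intros Hm. destruct (argmin_fin f Hp p Hm) as [fp Hfp].
  destruct (Rf_fin d f Rf Hp Hres p) as [fu Hfu].
  pose proof (Hres p p) as K. cbv beta in K. rewrite Hfu, Hfp, (d_refl d H), tan_0 in K.
  simpl in K. pose proof (Hm (Rf p)) as K2. rewrite Hfu, Hfp in K2. simpl in K2.
  rewrite (tansin _ (cos_d_pos d H _ _)) in K.
  pose proof (cos_d_pos d H (Rf p) p). pose proof (cos_d_le1 d H (Rf p) p).
  set (c := cos (d (Rf p) p)) in *.
  assert (c >= 1).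
  { destruct (Rle_lt_dec 1 c) as [h|h]; [lra|].
    assert (1 < / c). { rewrite <- Rinv_1. apply Rinv_lt_contravar; lra. } lra. }
  assert (Hc1 : cos (d (Rf p) p) = cos 0) by (rewrite cos_0; fold c; lra).
  apply (d_eq0 d H). pose proof (d_nn d H (Rf p) p). pose proof (d_lt d H (Rf p) p). pose proof PI_RGT_0.
  assert (d (Rf p) p <= 0) by (apply cos_le_inv; try lra; rewrite Hc1; lra). lra.
Qed.

Lemma Fejer {X} (d : X -> X -> R) f Rf (H : SH d) (Hp : proper f) (Hconv : convex d f)
  (Hres : is_resolvent d f Rf) p x : is_argmin f p ->
  cos (d x p) <= cos (d (Rf x) x) * cos (d (Rf x) p).
Proof.
  intros Hm. destruct (argmin_fin f Hp p Hm) as [fp Hfp].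
  destruct (Rf_fin d f Rf Hp Hres x) as [fu Hfu].
  destruct (Req_dec (d (Rf x) p) 0) as [h0|h0].
  - pose proof (d_eq0 d H _ _ h0) as E. rewrite h0, cos_0, E, (d_sym d H p x). lra.
  - assert (Hl : 0 < d (Rf x) p) by (pose proof (d_nn d H (Rf x) p); lra).
    pose proof (RI d f Rf H Hconv Hres x p fu fp Hfu Hfp Hl) as K.
    pose proof (Hm (Rf x)) as K2. rewrite Hfu, Hfp in K2. simpl in K2.
    assert (0 <= (fu - fp) / d (Rf x) p) by (apply Rdiv_le_0_compat; lra).
    assert (sl : 0 < sin (d (Rf x) p)) by (apply sin_gt_0; pose proof (d_lt d H (Rf x) p); pose proof PI_RGT_0; lra).
    pose proof (cos_d_pos d H (Rf x) x).
    assert (0 < 1 + / cos (d (Rf x) x) ^ 2).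
    { assert (0 < / cos (d (Rf x) x) ^ 2) by (apply Rinv_0_lt_compat; nra). lra. }
    set (A := cos (d (Rf x) x) * cos (d (Rf x) p) - cos (d p x)) in *.
    assert (0 <= A).
    { destruct (Rle_lt_dec 0 A) as [h|h]; auto.
      assert ((1 + / cos (d (Rf x) x) ^ 2) * A / sin (d (Rf x) p) < 0).
      { apply Rdiv_neg_pos; auto. nra. } lra. }
    unfold A in *. rewrite (d_sym d H p x) in *. lra.
Qed.

Definition LSu (u : nat -> R) : R := real (LimSup_seq u).

Lemma LSu_prop (u : nat -> R) B : (forall n, 0 <= u n <= B) ->
  is_limsup u (LSu u) /\ 0 <= LSu u <= B.
Proof.
  intros Hb. unfold LSu. destruct (ex_LimSup_seq u) as [l Hl].
  rewrite (is_LimSup_seq_unique u l Hl).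
  destruct l as [l0| |]; simpl in Hl |- *.
  - split; [split|split].
    + intros eps Heps. destruct (Hl (mkposreal eps Heps)) as [_ [N HN]]. exists N.
      intros n Hn. specialize (HN n Hn). simpl in HN. lra.
    + intros eps N Heps. destruct (Hl (mkposreal eps Heps)) as [HN _]. destruct (HN N) as [n [Hn1 Hn2]].
      exists n. simpl in Hn2. split; auto; lra.
    + destruct (Rle_lt_dec 0 l0) as [h|h]; auto. exfalso.
      destruct (Hl (mkposreal (- l0 / 2) ltac:(lra))) as [_ [N HN]]. specialize (HN N (le_n _)).
      simpl in HN. specialize (Hb N). lra.
    + destruct (Rle_lt_dec l0 B) as [h|h]; auto. exfalso.
      destruct (Hl (mkposreal ((l0 - B) / 2) ltac:(lra))) as [HN _]. destruct (HN 0%nat) as [n [_ Hn]].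
      simpl in Hn. specialize (Hb n). lra.
  - exfalso. destruct (Hl B 0%nat) as [n [_ Hn]]. specialize (Hb n). lra.
  - exfalso. destruct (Hl 0) as [N HN]. specialize (HN N (le_n _)). specialize (Hb N). lra.
Qed.

Lemma limsup_uniq u L1 L2 : is_limsup u L1 -> is_limsup u L2 -> L1 = L2.
Proof.
  intros [A1 B1] [A2 B2].
  destruct (Rtotal_order L1 L2) as [h|[h|h]]; auto; exfalso.
  - destruct (A1 ((L2 - L1)/3) ltac:(lra)) as [N HN].
    destruct (B2 ((L2 - L1)/3) N ltac:(lra)) as [n [Hn1 Hn2]]. specialize (HN n Hn1). lra.
  - destruct (A2 ((L1 - L2)/3) ltac:(lra)) as [N HN].
    destruct (B1 ((L1 - L2)/3) N ltac:(lra)) as [n [Hn1 Hn2]]. specialize (HN n Hn1). lra.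
Qed.

Lemma limsup_mono u v Lu Lv c N0 : (forall n, (N0 <= n)%nat -> u n <= v n + c) ->
  is_limsup u Lu -> is_limsup v Lv -> Lu <= Lv + c.
Proof.
  intros Huv [Au Bu] [Av Bv].
  apply Rnot_lt_le. intros h.
  set (e := (Lu - Lv - c) / 3).
  destruct (Av e ltac:(unfold e; lra)) as [N HN].
  destruct (Bu e (max N N0) ltac:(unfold e; lra)) as [n [Hn1 Hn2]].
  specialize (HN n ltac:(lia)). specialize (Huv n ltac:(lia)). unfold e in *. lra.
Qed.

Lemma find3 (u1 u2 u3 : nat -> R) L1 L2 L3 e : is_limsup u1 L1 -> is_limsup u2 L2 -> is_limsup u3 L3 ->
  e > 0 -> exists i, u1 i <= L1 + e /\ u2 i <= L2 + e /\ L3 - e <= u3 i.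
Proof.
  intros [A1 _] [A2 _] [_ B3] He.
  destruct (A1 e He) as [N1 H1]. destruct (A2 e He) as [N2 H2].
  destruct (B3 e (max N1 N2) He) as [n [Hn1 Hn2]].
  exists n. split; [apply H1; lia|split; [apply H2; lia|auto]].
Qed.

Definition LSd {X} (d : X -> X -> R) (s : nat -> X) (w : X) : R := LSu (fun i => d (s i) w).

Lemma LSd_prop {X} (d : X -> X -> R) (H : SH d) s w :
  is_limsup (fun i => d (s i) w) (LSd d s w) /\ 0 <= LSd d s w <= PI / 2.
Proof.
  apply LSu_prop. intros n. split; [apply (d_nn d H)|left; apply (d_lt d H)].
Qed.

Lemma LSd_lip {X} (d : X -> X -> R) (H : SH d) s w w' : LSd d s w <= LSd d s w' + d w' w.
Proof.
  apply (limsup_mono (fun i => d (s i) w) (fun i => d (s i) w') _ _ _ 0%nat).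
  - intros n _. apply (d_tri d H).
  - apply LSd_prop; auto.
  - apply LSd_prop; auto.
Qed.

Lemma inv_small e : 0 < e -> exists N, forall m, (N <= m)%nat -> / INR (S m) < e.
Proof.
  intros He. destruct (archimed_cor1 e He) as [N [HN HN0]]. exists N. intros m Hm.
  apply Rle_lt_trans with (/ INR N); auto.
  apply Rinv_le_contravar; [apply lt_0_INR; lia|apply le_INR; lia].
Qed.

Lemma strict_mid {X} (d : X -> X -> R) (H : SH d) s r w z :
  0 <= r < PI / 2 -> (forall v, r <= LSd d s v) -> LSd d s w <= r -> LSd d s z <= r -> w = z.
Proof.
  intros Hr Hrl Hw Hz. apply NNPP. intros Hne.
  assert (Hd : 0 < d w z).
  { pose proof (d_nn d H w z). destruct (Req_dec (d w z) 0) as [h|h]; [|lra].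
    exfalso; apply Hne; apply (d_eq0 d H); auto. }
  destruct (d_geo d H w z) as [c Hc].
  set (m := c (d w z / 2)).
  pose proof PI2_3_2. pose proof (d_lt d H w z).
  assert (cr : 0 < cos r) by (apply cos_gt_0; lra).
  assert (cd : cos (d w z / 2) < 1).
  { rewrite <- cos_0. apply cos_decreasing_1; lra. }
  set (q := cos r * (1 - cos (d w z / 2))).
  assert (Hq : 0 < q) by (unfold q; apply Rmult_lt_0_compat; lra).
  set (e := Rmin (q / 4) (1 / 2)).
  assert (He : 0 < e) by (unfold e; apply Rmin_glb_lt; lra).
  assert (He1 : e <= q / 4) by apply Rmin_l.
  assert (He2 : e <= 1 / 2) by apply Rmin_r.
  destruct (find3 _ _ _ _ _ _ e (proj1 (LSd_prop d H s w)) (proj1 (LSd_prop d H s z))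
     (proj1 (LSd_prop d H s m)) He) as [i [G1 [G2 G3]]].
  pose proof (Hrl m) as G4.
  pose proof (MidKey d H w z c (s i) r e Hc Hd ltac:(lra) ltac:(lra) ltac:(lra) ltac:(lra) ltac:(lra) ltac:(fold m; lra)) as G5.
  fold q in G5. lra.
Qed.

Lemma center {X} (d : X -> X -> R) (H : SH d) (Hcomp : complete d) s w0 :
  LSd d s w0 < PI / 2 ->
  exists z, LSd d s z < PI / 2 /\ forall w, w <> z -> LSd d s z < LSd d s w.
Proof.
  intros Hw0.
  assert (Hinf : exists r, 0 <= r /\ (forall w, r <= LSd d s w) /\
                   (forall e, e > 0 -> exists w, LSd d s w < r + e)).
  { set (E := fun t => exists w, t = - LSd d s w).
    destruct (completeness E) as [m [Hub Hlub]].
    - exists 0. intros t [w ->]. pose proof (LSd_prop d H s w). lra.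
    - exists (- LSd d s w0). exists w0; auto.
    - exists (- m). split; [|split].
      + assert (m <= 0); [|lra]. apply Hlub. intros t [w ->]. pose proof (LSd_prop d H s w). lra.
      + intros w. assert (- LSd d s w <= m) by (apply Hub; exists w; auto). lra.
      + intros e He. apply NNPP. intros Hn.
        assert (m <= m - e); [|lra]. apply Hlub. intros t [w ->].
        destruct (Rlt_le_dec (LSd d s w) (- m + e)) as [h|h]; [exfalso; apply Hn; eauto|lra]. }
  destruct Hinf as [r [Hr0 [Hrl Hre]]].
  assert (Hr2 : r < PI / 2) by (specialize (Hrl w0); lra).
  pose proof PI2_3_2.
  assert (cr : 0 < cos r) by (apply cos_gt_0; lra).
  assert (Hz : forall k : nat, exists w, LSd d s w < r + / INR (S k)).
  { intros k. apply Hre. apply Rinv_0_lt_compat, lt_0_INR; lia. }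
  set (zs := fun k => proj1_sig (constructive_indefinite_description _ (Hz k))).
  assert (Hzs : forall k, LSd d s (zs k) < r + / INR (S k)).
  { intros k. unfold zs. destruct (constructive_indefinite_description _ (Hz k)); auto. }
  assert (Cauchy : forall eps, eps > 0 -> exists N, forall m n, (N <= m)%nat -> (N <= n)%nat ->
            d (zs m) (zs n) < eps).
  { intros eps Heps.
    destruct (Rlt_le_dec (PI / 2) eps) as [hb|hb].
    { exists 0%nat. intros. pose proof (d_lt d H (zs m) (zs n)). lra. }
    assert (cd : cos (eps / 2) < 1).
    { rewrite <- cos_0. apply cos_decreasing_1; lra. }
    set (q := cos r * (1 - cos (eps / 2))).
    assert (Hq : 0 < q) by (unfold q; apply Rmult_lt_0_compat; lra).
    set (e := Rmin (q / 8) (1 / 2)).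
    assert (He : 0 < e) by (unfold e; apply Rmin_glb_lt; lra).
    assert (He1 : e <= q / 8) by apply Rmin_l.
    assert (He2 : e <= 1 / 2) by apply Rmin_r.
    destruct (inv_small e He) as [N HN]. exists N. intros m n Hm Hn.
    pose proof (Hzs m) as Zm. pose proof (Hzs n) as Zn. pose proof (HN m Hm). pose proof (HN n Hn).
    destruct (Req_dec (d (zs m) (zs n)) 0) as [h0|h0]; [lra|].
    assert (Hd : 0 < d (zs m) (zs n)) by (pose proof (d_nn d H (zs m) (zs n)); lra).
    destruct (d_geo d H (zs m) (zs n)) as [c Hc].
    set (mm := c (d (zs m) (zs n) / 2)).
    destruct (find3 _ _ _ _ _ _ e (proj1 (LSd_prop d H s (zs m))) (proj1 (LSd_prop d H s (zs n)))
       (proj1 (LSd_prop d H s mm)) He) as [i [G1 [G2 G3]]].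
    pose proof (Hrl mm).
    pose proof (MidKey d H (zs m) (zs n) c (s i) r (2 * e) Hc Hd ltac:(lra) ltac:(lra) ltac:(lra)
       ltac:(lra) ltac:(lra) ltac:(fold mm; lra)) as MK.
    pose proof (d_lt d H (zs m) (zs n)).
    assert (cos (eps / 2) < cos (d (zs m) (zs n) / 2)).
    { unfold q in He1. nra. }
    assert (d (zs m) (zs n) / 2 < eps / 2) by (apply cos_lt_inv; lra).
    lra. }
  destruct (Hcomp zs Cauchy) as [zz Hzz].
  assert (Hzr : LSd d s zz <= r).
  { apply Rnot_lt_le. intros h. set (e := (LSd d s zz - r) / 2).
    destruct (Hzz e ltac:(unfold e; lra)) as [N1 HN1].
    destruct (inv_small e ltac:(unfold e; lra)) as [N2 HN2].
    set (k := max N1 N2).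
    pose proof (HN1 k ltac:(unfold k; lia)). pose proof (HN2 k ltac:(unfold k; lia)).
    pose proof (Hzs k). pose proof (LSd_lip d H s zz (zs k)). unfold e in *. lra. }
  exists zz. split; [lra|]. intros w Hne.
  apply Rnot_le_lt. intros Hle. apply Hne.
  apply (strict_mid d H s r w zz); auto; lra.
Qed.

Lemma FixC {X} (d : X -> X -> R) f Rf (H : SH d) (Hp : proper f) (Hconv : convex d f)
  (Hres : is_resolvent d f Rf) (xs : nat -> X) z L r c0 :
  (forall n, xs (S n) = Rf (xs n)) -> 0 < c0 -> (forall n, c0 <= cos (d (xs (S n)) (xs n))) ->
  0 <= L <= PI / 2 -> 0 <= r <= PI / 2 ->
  (forall e, e > 0 -> exists k, L - e <= d (xs (S k)) (Rf z) /\
       d (xs k) (Rf z) <= d (xs (S k)) (Rf z) + e /\ d (xs (S k)) z <= r + e) ->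
  L <= r.
Proof.
  intros Hx Hc0 Hcs HL Hr Hk.
  pose proof PI2_3_2.
  set (K := 1 + / c0 ^ 2).
  assert (HK : 0 < K) by (unfold K; assert (0 < / c0 ^ 2) by (apply Rinv_0_lt_compat; nra); lra).
  assert (Main : forall e, 0 < e <= 1 -> cos r <= cos L + (K + 2) * e).
  { intros e He. destruct (Hk e ltac:(lra)) as [k [K1 [K2 K3]]].
    pose proof (PAIR d f Rf H Hp Hconv Hres (xs k) z) as P0.
    rewrite <- Hx in P0.
    set (a := xs k) in *. set (v := Rf z) in *. set (u := xs (S k)) in *.
    set (C := cos (d u a)) in *. set (D := cos (d v z)) in *.
    set (P := cos (d u v)) in *.
    assert (HC0 : c0 <= C) by (unfold C, u, a; apply Hcs).
    assert (HC1 : C <= 1) by apply COS_bound.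
    assert (HD0 : 0 < D) by apply (cos_d_pos d H).
    assert (HD1 : D <= 1) by apply COS_bound.
    assert (HP0 : 0 < P) by apply (cos_d_pos d H).
    assert (HP1 : P <= 1) by apply COS_bound.
    assert (HQ : P - e <= cos (d v a)).
    { rewrite (d_sym d H v a).
      pose proof (cos_lip1 (d u v) (d u v + e)).
      replace (d u v - (d u v + e)) with (- e) in H1 by ring.
      rewrite Rabs_Ropp, Rabs_pos_eq in H1 by lra.
      assert (cos (d u v + e) <= cos (d a v)).
      { apply cos_le_dec; [apply (d_nn d H)|lra|]. pose proof (d_lt d H u v). lra. }
      fold P in H1. lra. }
    assert (HinvC : / C ^ 2 <= / c0 ^ 2).
    { apply Rinv_le_contravar; [nra|]. apply pow_incr; lra. }
    assert (HinvC0 : 0 < / C ^ 2) by (apply Rinv_0_lt_compat; nra).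
    assert (LHS : - K * e <= (1 + / C ^ 2) * (cos (d v a) - C * P)).
    { assert (0 <= (1 - C) * P) by nra.
      assert ((1 + / C ^ 2) * (P - e - C * P) <= (1 + / C ^ 2) * (cos (d v a) - C * P)) by nra.
      unfold K. nra. }
    assert (Hcz : cos (r + e) <= cos (d u z)).
    { apply cos_le_dec; [apply (d_nn d H)|lra|lra]. }
    set (M := 1 + / D ^ 2) in *.
    assert (HM : 1 <= M) by (unfold M; assert (0 < / D ^ 2) by (apply Rinv_0_lt_compat; nra); lra).
    assert (HY : - K * e <= D * P - cos (r + e)).
    { assert (M * (D * P - cos (d u z)) <= M * (D * P - cos (r + e))) by nra.
      destruct (Rle_lt_dec 0 (D * P - cos (r + e))); nra. }
    assert (Hcre : cos r <= cos (r + e) + e).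
    { pose proof (cos_lip1 r (r + e)). replace (r - (r + e)) with (- e) in H1 by ring.
      rewrite Rabs_Ropp, Rabs_pos_eq in H1; lra. }
    assert (HPL : P <= cos L + e).
    { assert (P <= cos (Rmax 0 (L - e))).
      { apply cos_le_dec; [apply Rmax_l| |pose proof (d_lt d H u v); lra].
        apply Rmax_lub; [apply (d_nn d H)|]. lra. }
      pose proof (cos_lip1 (Rmax 0 (L - e)) L).
      assert (Rabs (Rmax 0 (L - e) - L) <= e).
      { apply Rabs_le. unfold Rmax; destruct (Rle_dec 0 (L - e)); lra. }
      lra. }
    assert (D * P <= P) by nra.
    lra. }
  apply cos_le_inv; try lra.
  apply Rnot_lt_le. intros h.
  set (e := Rmin 1 ((cos r - cos L) / (2 * (K + 2)))).
  assert (He : 0 < e) by (unfold e; apply Rmin_glb_lt; [lra|]; apply Rdiv_lt_0_compat; lra).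
  assert (He1 : e <= 1) by apply Rmin_l.
  assert (He2 : e <= (cos r - cos L) / (2 * (K + 2))) by apply Rmin_r.
  specialize (Main e ltac:(lra)).
  assert ((K + 2) * e <= (cos r - cos L) / 2).
  { apply Rmult_le_compat_l with (r := K + 2) in He2; [|lra].
    replace ((K + 2) * ((cos r - cos L) / (2 * (K + 2)))) with ((cos r - cos L) / 2) in He2 by (field; lra).
    lra. }
  lra.
Qed.

Lemma CF {X} (d : X -> X -> R) f Rf (H : SH d) (Hp : proper f) (Hconv : convex d f)
  (Hres : is_resolvent d f Rf) (xs : nat -> X) c0 s z :
  (forall n, xs (S n) = Rf (xs n)) -> 0 < c0 -> (forall n, c0 <= cos (d (xs (S n)) (xs n))) ->
  (forall w, w <> z -> LSd d s z < LSd d s w) ->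
  (forall e, e > 0 -> exists k, LSd d s (Rf z) - e <= d (xs (S k)) (Rf z) /\
       d (xs k) (Rf z) <= d (xs (S k)) (Rf z) + e /\ d (xs (S k)) z <= LSd d s z + e) ->
  Rf z = z.
Proof.
  intros Hx Hc0 Hcs Hcent Hk.
  pose proof (FixC d f Rf H Hp Hconv Hres xs z (LSd d s (Rf z)) (LSd d s z) c0 Hx Hc0 Hcs
    (proj2 (LSd_prop d H s _)) (proj2 (LSd_prop d H s _)) Hk).
  apply NNPP. intros hne. specialize (Hcent _ hne). lra.
Qed.

Lemma prod_id {X} (d : X -> X -> R) (H : SH d) (xs : nat -> X) z v :
  forall e, e > 0 -> exists k, LSd d xs v - e <= d (xs (S k)) v /\
       d (xs k) v <= d (xs (S k)) v + e /\ d (xs (S k)) z <= LSd d xs z + e.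
Proof.
  intros e He.
  destruct (LSd_prop d H xs v) as [[Av Bv] _]. destruct (LSd_prop d H xs z) as [[Az _] _].
  destruct (Av (e / 2) ltac:(lra)) as [N1 HN1]. destruct (Az e He) as [N2 HN2].
  destruct (Bv (e / 2) (S (max N1 N2)) ltac:(lra)) as [n [Hn1 Hn2]].
  destruct n as [|k]; [lia|]. exists k.
  split; [lra|split].
  - specialize (HN1 k ltac:(lia)). lra.
  - apply HN2. lia.
Qed.

Lemma phi_ge (phi : nat -> nat) : (forall i, (phi i < phi (S i))%nat) -> forall i, (i <= phi i)%nat.
Proof. intros Hphi. induction i; [lia|]. specialize (Hphi i). lia. Qed.

Lemma prod_sub {X} (d : X -> X -> R) (H : SH d) (xs : nat -> X) phi z v :
  (forall i, (phi i < phi (S i))%nat) ->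
  (forall eta, eta > 0 -> exists N, forall n, (N <= n)%nat -> d (xs n) (xs (S n)) <= eta) ->
  forall e, e > 0 -> exists k, LSd d (fun i => xs (phi i)) v - e <= d (xs (S k)) v /\
       d (xs k) v <= d (xs (S k)) v + e /\ d (xs (S k)) z <= LSd d (fun i => xs (phi i)) z + e.
Proof.
  intros Hphi Hst e He.
  pose proof (phi_ge phi Hphi) as Hge.
  destruct (LSd_prop d H (fun i => xs (phi i)) v) as [[_ Bv] _].
  destruct (LSd_prop d H (fun i => xs (phi i)) z) as [[Az _] _].
  destruct (Az e He) as [N2 HN2]. destruct (Hst e He) as [N3 HN3].
  destruct (Bv e (S (max N2 N3)) He) as [i [Hi1 Hi2]].
  specialize (Hge i). destruct (phi i) as [|k] eqn:Ep; [lia|].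
  exists k. cbv beta in Hi2. try rewrite Ep in Hi2. split; [lra|split].
  - specialize (HN3 k ltac:(lia)). pose proof (d_tri d H (xs k) (xs (S k)) v). lra.
  - specialize (HN2 i ltac:(lia)). cbv beta in HN2. try rewrite Ep in HN2. exact HN2.
Qed.

Lemma LSd_le {X} (d : X -> X -> R) (H : SH d) s w c N :
  (forall n, (N <= n)%nat -> d (s n) w <= c) -> LSd d s w <= c.
Proof.
  intros Hb. destruct (LSd_prop d H s w) as [[_ B] _].
  apply Rnot_lt_le. intros h. destruct (B ((LSd d s w - c) / 2) N ltac:(lra)) as [n [Hn1 Hn2]].
  specialize (Hb n Hn1). lra.
Qed.

Lemma iterS {X} (g : X -> X) x n : iter (S n) g x = g (iter n g x).
Proof. reflexivity. Qed.

Lemma mono_all (u : nat -> R) : (forall n, u (S n) <= u n) -> forall n m, (n <= m)%nat -> u m <= u n.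
Proof. intros Hu n m Hnm. induction Hnm; [lra|]. specialize (Hu m). lra. Qed.

Lemma mono_lower (u : nat -> R) L : (forall n, u (S n) <= u n) -> is_limsup u L -> forall n, L <= u n.
Proof.
  intros Hu [_ B] n. apply Rnot_lt_le. intros h.
  destruct (B ((L - u n) / 2) n ltac:(lra)) as [m [Hm1 Hm2]].
  pose proof (mono_all u Hu n m Hm1). lra.
Qed.

Lemma LSd_sub {X} (d : X -> X -> R) (H : SH d) (xs : nat -> X) phi q :
  (forall i, (phi i < phi (S i))%nat) -> (forall n, d (xs (S n)) q <= d (xs n) q) ->
  LSd d (fun i => xs (phi i)) q = LSd d xs q.
Proof.
  intros Hphi Hm. pose proof (phi_ge phi Hphi) as Hge.
  apply (limsup_uniq (fun i => d (xs (phi i)) q)); [apply LSd_prop; auto|].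
  destruct (LSd_prop d H xs q) as [[A B] _].
  pose proof (mono_lower (fun n => d (xs n) q) _ Hm (proj1 (LSd_prop d H xs q))) as Hlow.
  split.
  - intros e He. destruct (A e He) as [N HN]. exists N. intros n Hn. apply HN. specialize (Hge n). lia.
  - intros e N He. exists N. split; [lia|]. specialize (Hlow (phi N)). cbv beta in *. lra.
Qed.

Lemma Fej_mono {X} (d : X -> X -> R) f Rf (H : SH d) (Hp : proper f) (Hconv : convex d f)
  (Hres : is_resolvent d f Rf) q y : is_argmin f q -> d (Rf y) q <= d y q.
Proof.
  intros Hq. pose proof (Fejer d f Rf H Hp Hconv Hres q y Hq).
  pose proof (cos_d_pos d H (Rf y) y). pose proof (cos_d_le1 d H (Rf y) y).
  pose proof (cos_d_pos d H (Rf y) q).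
  assert (cos (d y q) <= cos (d (Rf y) q)) by nra.
  pose proof PI2_3_2. pose proof (d_lt d H y q). pose proof (d_lt d H (Rf y) q).
  pose proof (d_nn d H y q). pose proof (d_nn d H (Rf y) q).
  apply cos_le_inv; lra.
Qed.

Lemma steps_small {X} (d : X -> X -> R) f Rf (H : SH d) (Hp : proper f) (Hconv : convex d f)
  (Hres : is_resolvent d f Rf) (xs : nat -> X) p0 :
  (forall n, xs (S n) = Rf (xs n)) -> is_argmin f p0 ->
  forall eta, eta > 0 -> exists N, forall n, (N <= n)%nat -> d (xs n) (xs (S n)) <= eta.
Proof.
  intros Hx Hp0 eta Heta.
  pose proof PI2_3_2.
  destruct (Rlt_le_dec (PI / 2) eta) as [hb|hb].
  { exists 0%nat. intros n _. pose proof (d_lt d H (xs n) (xs (S n))). lra. }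
  assert (Hm : forall n, d (xs (S n)) p0 <= d (xs n) p0).
  { intros n. rewrite Hx. apply (Fej_mono d f Rf H Hp Hconv Hres); auto. }
  set (lam := LSd d xs p0).
  destruct (LSd_prop d H xs p0) as [HL [HL0 HL1]]. fold lam in HL, HL0, HL1.
  pose proof (mono_lower _ _ Hm HL) as Hlow. cbv beta in Hlow.
  assert (Hlam : lam <= d (xs 0%nat) p0) by apply Hlow.
  pose proof (d_lt d H (xs 0%nat) p0).
  assert (cl : 0 < cos lam) by (apply cos_gt_0; lra).
  assert (ce : cos eta < 1) by (rewrite <- cos_0; apply cos_decreasing_1; lra).
  set (e := cos lam * (1 - cos eta)).
  assert (He : 0 < e) by (unfold e; apply Rmult_lt_0_compat; lra).
  destruct HL as [A _]. destruct (A e He) as [N HN]. exists N. intros n Hn.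
  specialize (HN n Hn). cbv beta in HN.
  pose proof (Fejer d f Rf H Hp Hconv Hres p0 (xs n) Hp0) as F0. rewrite <- Hx in F0.
  set (C := cos (d (xs (S n)) (xs n))) in *.
  assert (c1 : cos (d (xs (S n)) p0) <= cos lam).
  { apply cos_le_dec; [lra|apply Hlow|pose proof (d_lt d H (xs (S n)) p0); lra]. }
  assert (c2 : cos lam - e <= cos (d (xs n) p0)).
  { pose proof (cos_lip1 lam (lam + e)). replace (lam - (lam + e)) with (- e) in H2 by ring.
    rewrite Rabs_Ropp, Rabs_pos_eq in H2 by lra.
    assert (cos (lam + e) <= cos (d (xs n) p0)).
    { apply cos_le_dec; [apply (d_nn d H)|lra|].
      assert (0 <= cos eta) by (apply cos_ge_0; lra).
      assert (e <= 1) by (unfold e; pose proof (COS_bound lam); nra). lra. }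
    lra. }
  assert (HC0 : 0 < C) by apply (cos_d_pos d H).
  assert (HC : cos eta <= C).
  { assert (cos lam - e <= C * cos lam).
    { pose proof (cos_d_pos d H (xs (S n)) p0). nra. }
    unfold e in H2. nra. }
  rewrite (d_sym d H). apply cos_le_inv; [| |exact HC]; try lra.
  split; [apply (d_nn d H)|pose proof (d_lt d H (xs (S n)) (xs n)); lra].
Qed.

Lemma back {X} (d : X -> X -> R) f Rf (H : SH d) (Hcomp : complete d) (Hp : proper f)
  (Hconv : convex d f) (Hres : is_resolvent d f Rf) x :
  spherically_bounded d (fun n => iter n Rf x) ->
  sup_lt (fun n => d (iter (S n) Rf x) (iter n Rf x)) (PI / 2) ->
  exists p, is_argmin f p.
Proof.
  intros [y [c' [N [Hc' Hb]]]] [c'' [Hc'' Hs]].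
  set (xs := fun n => iter n Rf x).
  assert (Hx : forall n, xs (S n) = Rf (xs n)) by reflexivity.
  assert (Hy : LSd d xs y < PI / 2).
  { apply Rle_lt_trans with c'; auto. apply (LSd_le d H xs y c' N). exact Hb. }
  destruct (center d H Hcomp xs y Hy) as [z [Hz1 Hz2]].
  pose proof PI2_3_2.
  assert (h0 : 0 <= c'') by (specialize (Hs 0%nat); pose proof (d_nn d H (iter 1 Rf x) (iter 0 Rf x)); simpl in *; lra).
  assert (Hc0 : 0 < cos c'') by (apply cos_gt_0; lra).
  assert (Hcs : forall n, cos c'' <= cos (d (xs (S n)) (xs n))).
  { intros n. apply cos_le_dec; [apply (d_nn d H)|apply Hs|lra]. }
  pose proof (CF d f Rf H Hp Hconv Hres xs (cos c'') xs z Hx Hc0 Hcs Hz2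
     (prod_id d H xs z (Rf z))) as Hfix.
  exists z. apply (FixArg d f Rf H Hp Hconv Hres z Hfix).
Qed.

Lemma part2 {X} (d : X -> X -> R) f Rf (H : SH d) (Hcomp : complete d) (Hp : proper f)
  (Hconv : convex d f) (Hres : is_resolvent d f Rf) p0 x :
  is_argmin f p0 -> exists p, is_argmin f p /\ Delta_conv d (fun n => iter n Rf x) p.
Proof.
  intros Hp0.
  set (xs := fun n => iter n Rf x).
  assert (Hx : forall n, xs (S n) = Rf (xs n)) by reflexivity.
  assert (Hm : forall q, is_argmin f q -> forall n, d (xs (S n)) q <= d (xs n) q).
  { intros q Hq n. rewrite Hx. apply (Fej_mono d f Rf H Hp Hconv Hres); auto. }
  assert (Hbd : forall n, d (xs n) p0 <= d (xs 0%nat) p0).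
  { intros n. apply (mono_all (fun n => d (xs n) p0)); [apply Hm; auto|lia]. }
  pose proof PI2_3_2.
  pose proof (d_lt d H (xs 0%nat) p0).
  pose proof (d_nn d H (xs 0%nat) p0).
  set (c0 := cos (d (xs 0%nat) p0)).
  assert (Hc0 : 0 < c0) by (apply cos_gt_0; lra).
  assert (Hcs : forall n, c0 <= cos (d (xs (S n)) (xs n))).
  { intros n. pose proof (Fejer d f Rf H Hp Hconv Hres p0 (xs n) Hp0) as F0. rewrite <- Hx in F0.
    assert (c0 <= cos (d (xs n) p0)).
    { apply cos_le_dec; [apply (d_nn d H)|apply Hbd|lra]. }
    pose proof (cos_d_pos d H (xs (S n)) (xs n)). pose proof (cos_d_le1 d H (xs (S n)) p0).
    pose proof (cos_d_pos d H (xs (S n)) p0). nra. }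
  pose proof (steps_small d f Rf H Hp Hconv Hres xs p0 Hx Hp0) as Hst.
  assert (Cphi : forall phi : nat -> nat, (forall i, (phi i < phi (S i))%nat) ->
    exists z, is_argmin f z /\ forall w, w <> z ->
      LSd d (fun i => xs (phi i)) z < LSd d (fun i => xs (phi i)) w).
  { intros phi Hphi.
    assert (Hy : LSd d (fun i => xs (phi i)) p0 < PI / 2).
    { apply Rle_lt_trans with (d (xs 0%nat) p0); auto.
      apply (LSd_le d H _ p0 _ 0%nat). intros n _. apply Hbd. }
    destruct (center d H Hcomp _ p0 Hy) as [z [Hz1 Hz2]].
    pose proof (CF d f Rf H Hp Hconv Hres xs c0 _ z Hx Hc0 Hcs Hz2
       (prod_sub d H xs phi z (Rf z) Hphi Hst)) as Hfix.
    exists z. split; auto. apply (FixArg d f Rf H Hp Hconv Hres z Hfix). }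
  destruct (Cphi (fun i => i) ltac:(intros; cbv beta; lia)) as [ps [Hps1 Hps2]].
  exists ps. split; auto.
  intros phi Hphi.
  destruct (Cphi phi Hphi) as [zp [Hzp1 Hzp2]].
  assert (Ezp : zp = ps).
  { apply NNPP. intros hne.
    pose proof (Hps2 zp hne) as A1. pose proof (Hzp2 ps (not_eq_sym hne)) as A2.
    rewrite (LSd_sub d H xs phi zp Hphi (Hm zp Hzp1)) in A2.
    rewrite (LSd_sub d H xs phi ps Hphi (Hm ps Hps1)) in A2.
    simpl in A1. unfold LSd in A1 at 1 2. unfold LSd in A2. lra. }
  subst zp.
  exists (LSd d (fun i => xs (phi i)) ps). split.
  - apply (LSd_prop d H (fun i => xs (phi i)) ps).
  - intros z Lz hz HLz.
    rewrite <- (limsup_uniq _ _ _ (proj1 (LSd_prop d H (fun i => xs (phi i)) z)) HLz).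
    apply Hzp2; auto.
Qed.

Theorem corollary4p8 (X : Type) (d : X -> X -> R) (f : X -> ER) (Rf : X -> X) :
  CAT1_space d -> admissible d -> complete d ->
  proper f -> lsc d f -> convex d f ->
  is_resolvent d f Rf ->
  ((exists p, is_argmin f p) <->
     exists x, spherically_bounded d (fun n => iter n Rf x) /\
               sup_lt (fun n => d (iter (S n) Rf x) (iter n Rf x)) (PI / 2)) /\
  ((exists p, is_argmin f p) ->
     forall x, exists p, is_argmin f p /\ Delta_conv d (fun n => iter n Rf x) p).
Proof.
  intros Hcat Had Hcomp Hp Hl Hconv Hres.
  assert (H : SH d) by (destruct Hcat as [a [b c]]; exact (conj a (conj b (conj c Had)))).
  split; [split|].
  - intros [p Hpm]. pose proof (ArgFix d f Rf H Hp Hres p Hpm) as Hfix.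
    assert (Hit : forall n, iter n Rf p = p).
    { induction n; [reflexivity|]. rewrite iterS, IHn; exact Hfix. }
    exists p. split.
    + exists p, 0, 0%nat. split; [pose proof PI_RGT_0; lra|].
      intros n _. cbv beta. rewrite Hit, (d_refl d H). lra.
    + exists 0. split; [pose proof PI_RGT_0; lra|].
      intros n. rewrite !Hit, (d_refl d H). lra.
  - intros [x [Hsb Hsup]]. apply (back d f Rf H Hcomp Hp Hconv Hres x Hsb Hsup).
  - intros [p0 Hp0] x. apply (part2 d f Rf H Hcomp Hp Hconv Hres p0 x Hp0).
Qed.
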